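(* Let $A$ be an $n\times n$ matrix with a designated set of large positions, and let $(X,Y)$ be a restriction with $|X|\ge1$ that is $q$-good for some $q<1/50$. Then $(X,Y)$ has a $13q$-strong line.
   Context: Let $A=(a_{ij})_{i,j\in[n]}$ with a designated set $L\subseteq[n]\times[n]$ of large positions. A restriction is $(X,Y)$ with $X,Y\subseteq[n]$, $|X|=|Y|$; a generalized diagonal of $A[X,Y]$ is $\{(i,\sigma(i)):i\in X\}$ for a bijection $\sigma:X\to Y$, random meaning uniform $\sigma$; it is good if it contains exactly one large position; $(X,Y)$ is $q$-good if a random generalized diagonal is good with probability $\ge1-q$. For $i\in X$, row $i$ is $p$-strong for $(X,Y)$ if at least $(1-p)|Y|$ of the positions $\{(i,j):j\in Y\}$ are large; column $j\in Y$ is $p$-strong if at least $(1-p)|X|$ of $\{(i,j):i\in X\}$ are large. A $p$-strong line is a $p$-strong row or column. *)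

(* Defs.v *)
From HB Require Import structures.
From mathcomp Require Import all_boot all_order all_algebra.
Set Implicit Arguments. Unset Strict Implicit. Unset Printing Implicit Defensive.
Import Order.TTheory GRing.Theory Num.Theory.
Local Open Scope ring_scope.

(* Positions of an n x n matrix: pairs (row, column) in 'I_n * 'I_n.
   The set of large positions is L : {set 'I_n * 'I_n}. *)

(* A bijection sigma : X -> Y is represented canonically by the finite function
   f : 'I_n -> 'I_n that agrees with sigma on X and is the identity off X.
   This gives a one-to-one correspondence between bijections X -> Y and
   the f satisfying [is_bij X Y f]. *)
Definition is_bij n (X Y : {set 'I_n}) (f : {ffun 'I_n -> 'I_n}) : bool :=
  [&& [forall i, (i \notin X) ==> (f i == i)],
      [forall i in X, forall j in X, (f i == f j) ==> (i == j)]
    & (f @: X == Y)].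

Definition bijs n (X Y : {set 'I_n}) : {set {ffun 'I_n -> 'I_n}} :=
  [set f | is_bij X Y f].

Definition good_diag n (L : {set 'I_n * 'I_n}) (X : {set 'I_n})
    (f : {ffun 'I_n -> 'I_n}) : bool :=
  #|[set i in X | (i, f i) \in L]| == 1%N.

Definition q_good (R : realFieldType) n (L : {set 'I_n * 'I_n})
    (X Y : {set 'I_n}) (q : R) : Prop :=
  1 - q <= (#|[set f in bijs X Y | good_diag L X f]|%:R / #|bijs X Y|%:R).

Definition strong_row (R : realFieldType) n (L : {set 'I_n * 'I_n})
    (X Y : {set 'I_n}) (p : R) (i : 'I_n) : Prop :=
  i \in X /\ (1 - p) * #|Y|%:R <= #|[set j in Y | (i, j) \in L]|%:R.

Definition strong_col (R : realFieldType) n (L : {set 'I_n * 'I_n})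
    (X Y : {set 'I_n}) (p : R) (j : 'I_n) : Prop :=
  j \in Y /\ (1 - p) * #|X|%:R <= #|[set i in X | (i, j) \in L]|%:R.

Definition has_strong_line (R : realFieldType) n (L : {set 'I_n * 'I_n})
    (X Y : {set 'I_n}) (p : R) : Prop :=
  (exists i, strong_row L X Y p i) \/ (exists j, strong_col L X Y p j).

(* Main.v *)
Require Import Defs.
From HB Require Import structures.
From mathcomp Require Import all_boot all_order all_algebra all_fingroup.
From mathcomp Require Import zify ring lra.
Import Order.TTheory GRing.Theory Num.Theory.

Set Implicit Arguments. Unset Strict Implicit. Unset Printing Implicit Defensive.

Lemma card_pairs (T1 T2 : finType) (A : {set T1}) (B : T1 -> {set T2}) :
  #|[set p : T1 * T2 | (p.1 \in A) && (p.2 \in B p.1)]| = \sum_(a in A) #|B a|.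
Proof.
rewrite -sum1_card.
rewrite (eq_bigl (fun p : T1 * T2 => (p.1 \in A) && (p.2 \in B p.1))); last first.
  by move=> p; rewrite inE.
rewrite -(pair_big_dep (fun a => a \in A) (fun a b => b \in B a) (fun _ _ => 1%N)) /=.
by apply: eq_bigr => a _; rewrite sum1_card.
Qed.

Lemma sum_bool_card (T : finType) (A : {set T}) (P : pred T) :
  (\sum_(k in A) (P k : nat))%N = #|[set k in A | P k]|.
Proof.
rewrite -sum1_card [RHS]big_mkcond [LHS]big_mkcond; apply: eq_bigr => k _.
by rewrite inE; case: (k \in A); case: (P k).
Qed.

Section Comb.
Variables (n : nat) (L : {set 'I_n * 'I_n}) (X Y : {set 'I_n}) (d : 'I_n).

Notation F := {ffun 'I_n -> 'I_n}.

Lemma bij_out (f : F) x : is_bij X Y f -> x \notin X -> f x = x.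
Proof. by case/and3P=> /forallP H _ _ xX; move: (H x) => /implyP /(_ xX) /eqP. Qed.

Lemma bij_inj (f : F) : is_bij X Y f -> {in X &, injective f}.
Proof.
case/and3P=> _ /forallP H _ x y xX yX fxy.
by move: (H x) => /implyP /(_ xX) /forallP /(_ y) /implyP /(_ yX) /implyP
  /(_ (introT eqP fxy)) /eqP.
Qed.

Lemma bij_img (f : F) : is_bij X Y f -> f @: X = Y.
Proof. by case/and3P=> _ _ /eqP. Qed.

Lemma bij_in (f : F) x : is_bij X Y f -> x \in X -> f x \in Y.
Proof. by move=> hb xX; rewrite -(bij_img hb); apply: imset_f. Qed.

Lemma bij_onto (f : F) y : is_bij X Y f -> y \in Y -> exists2 x, x \in X & y = f x.
Proof. by move=> hb; rewrite -(bij_img hb) => /imsetP. Qed.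

Definition sw (f : F) (a b : 'I_n) : F := [ffun x => f (tperm a b x)].

Lemma swE f a b x : sw f a b x = f (tperm a b x).
Proof. by rewrite ffunE. Qed.

Lemma swK f a b : sw (sw f a b) a b = f.
Proof. by apply/ffunP=> x; rewrite !swE tpermK. Qed.

Lemma tperm_in a b x : a \in X -> b \in X -> x \in X -> tperm a b x \in X.
Proof. by move=> aX bX xX; case: tpermP. Qed.

Lemma sw_bij f a b : is_bij X Y f -> a \in X -> b \in X -> is_bij X Y (sw f a b).
Proof.
move=> hb aX bX; apply/and3P; split.
- apply/forallP=> x; apply/implyP=> xX; rewrite swE tpermD ?(bij_out hb) //.
  + by apply/eqP=> ax; move: xX; rewrite -ax aX.
  + by apply/eqP=> ax; move: xX; rewrite -ax bX.
- apply/forallP=> x; apply/implyP=> xX; apply/forallP=> y; apply/implyP=> yX.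
  apply/implyP; rewrite !swE => /eqP /(bij_inj hb).
  move=> /(_ (tperm_in aX bX xX) (tperm_in aX bX yX)) /perm_inj ->; exact: eqxx.
- apply/eqP; apply/setP=> y; rewrite -[y \in Y]/(y \in Y); apply/imsetP/idP.
  + by case=> x xX ->; rewrite swE; apply: bij_in (tperm_in aX bX xX).
  + move=> /(bij_onto hb) [x xX ->]; exists (tperm a b x); first exact: tperm_in.
    by rewrite swE tpermK.
Qed.

Lemma card_img (f : F) i (P : pred 'I_n) : is_bij X Y f -> i \in X ->
  #|[set k in X :\ i | P (f k)]| = #|[set l in Y :\ f i | P l]|.
Proof.
move=> hb iX; rewrite -(card_in_imset (f := f)); last first.
  move=> x y; rewrite !inE => /andP [/andP [_ xX] _] /andP [/andP [_ yX] _].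
  exact: bij_inj.
apply: eq_card => y; rewrite [in RHS]inE; apply/imsetP/idP.
- case=> x; rewrite !inE => /andP [/andP [xi xX] Px] ->.
  rewrite Px (bij_in hb xX) !andbT; apply: contraNneq xi => fxi.
  by rewrite (bij_inj hb xX iX fxi).
- case/andP; rewrite inE => /andP [yi yY] Py; have [x xX yx] := bij_onto hb yY.
  exists x => //; rewrite !inE xX -yx Py andbT /= .
  by rewrite andbT; apply: contraNneq yi => xi; rewrite inE yx xi.
Qed.

Definition LR (f : F) := [set x in X | (x, f x) \in L].
Definition Good := [set f in bijs X Y | good_diag L X f].
Definition u (f : F) := odflt d [pick x in LR f].

Lemma uP f : f \in Good -> LR f = [set u f].
Proof.
rewrite inE => /andP [_]; rewrite /good_diag -/(LR f) => /cards1P [x H].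
rewrite /u H; case: pickP => [y|]; first by rewrite inE => /eqP ->.
by move=> /(_ x); rewrite inE eqxx.
Qed.

Lemma u_in f : f \in Good -> u f \in X.
Proof.
move=> /uP H; have : u f \in LR f by rewrite H set11.
by rewrite inE => /andP [].
Qed.

Lemma u_L f : f \in Good -> (u f, f (u f)) \in L.
Proof.
move=> /uP H; have : u f \in LR f by rewrite H set11.
by rewrite inE => /andP [].
Qed.

Lemma u_uniq f x : f \in Good -> x \in X -> (x, f x) \in L -> x = u f.
Proof.
move=> /uP H xX xL; have : x \in LR f by rewrite inE xX.
by rewrite H inE => /eqP.
Qed.

Lemma Good_bij f : f \in Good -> is_bij X Y f.
Proof. by rewrite !inE => /andP []. Qed.

Definition rr k := #|[set l in Y | (k, l) \in L]|.
Definition beta := (\sum_(k in X) rr k)%N.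
Definition av (f : F) := #|[set l in Y :\ f (u f) | (u f, l) \in L]|.
Definition bv (f : F) := #|[set k in X :\ u f | (k, f (u f)) \in L]|.
Definition Zset (f : F) := [set k in X :\ u f | ((u f, f k) \notin L) && ((k, f (u f)) \notin L)].
Definition Pset (f : F) := [set p : 'I_n * 'I_n | (p.1 \in X :\ u f) &&
   (p.2 \in [set k' in X :\ u f | (p.1, f k') \in L])].
Definition Qset (f : F) := setX [set k in X :\ u f | (u f, f k) \in L]
                          [set k in X :\ u f | (k, f (u f)) \in L].

Lemma Qset_card f : f \in Good -> #|Qset f| = (av f * bv f)%N.
Proof.
move=> fG; rewrite /Qset cardsX /av /bv.
by rewrite (card_img (fun l => (u f, l) \in L) (Good_bij fG) (u_in fG)).
Qed.

Lemma Zset_card f : f \in Good -> (#|X| <= #|Zset f| + av f + bv f + 1)%N.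
Proof.
move=> fG; set i := u f; set j := f i.
have iX : i \in X := u_in fG.
rewrite (cardsD1 i X) iX addnC leq_add2r.
have -> : av f = #|[set k in X :\ i | (i, f k) \in L]|.
  by rewrite (card_img (fun l => (i, l) \in L) (Good_bij fG) iX).
apply: leq_trans (leq_trans (leq_card_setU _ _) (leq_add (leq_card_setU _ _) (leqnn _))).
apply: subset_leq_card; apply/subsetP=> k kX.
rewrite !inE /=; move: kX; rewrite !inE => /andP [-> ->] /=.
by rewrite /i; case: ((u f, f k) \in L); case: ((k, f (u f)) \in L).
Qed.

Lemma rr_split (f : F) k : f \in Good ->
  rr k = (((k, f (u f)) \in L) : nat) + #|[set l in Y :\ f (u f) | (k, l) \in L]|.
Proof.
move=> fG; have jY : f (u f) \in Y := bij_in (Good_bij fG) (u_in fG).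
rewrite /rr (cardsD1 (f (u f))) inE jY /=; congr (_ + _)%N.
by apply: eq_card => l; rewrite !inE andbA.
Qed.

Lemma Pset_card f : f \in Good -> (#|Pset f| + av f + bv f + 1)%N = beta.
Proof.
move=> fG; set i := u f; set j := f i.
have iX : i \in X := u_in fG.
rewrite /beta (big_setD1 i iX) /= /Pset (card_pairs (X :\ u f) (fun a => [set k' in X :\ u f | (a, f k') \in L])).
have -> : (\sum_(a in X :\ u f) #|[set k' in X :\ u f | (a, f k') \in L]|
   = \sum_(k in X :\ i) #|[set l in Y :\ j | (k, l) \in L]|)%N.
  by apply: eq_bigr => k _; rewrite (card_img (fun l => (k, l) \in L) (Good_bij fG) iX).
have -> : (\sum_(k in X :\ i) rr k = \sum_(k in X :\ i) (((k, j) \in L) : nat)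
   + \sum_(k in X :\ i) #|[set l in Y :\ j | (k, l) \in L]|)%N.
  by rewrite -big_split /=; apply: eq_bigr => k _; rewrite (rr_split k fG).
rewrite sum_bool_card (rr_split i fG) -/i -/j (u_L fG) /av /bv -/i -/j.
rewrite /nat_of_bool; ring.
Qed.

Definition Zs := [set f in bijs X Y | LR f == set0].
Definition Ts := [set f in bijs X Y | (2 <= #|LR f| <= 3)%N].
Definition Bset := [set c : 'I_n * 'I_n | (c.1 \in X) && (c.2 \in [set l in Y | (c.1, l) \in L])].
Definition SA := [set p : F * 'I_n | (p.1 \in Good) && (p.2 \in Zset p.1)].
Definition SB := [set p : F * ('I_n * 'I_n) | (p.1 \in Good) && (p.2 \in Pset p.1)].
Definition SQ := [set p : F * ('I_n * 'I_n) | (p.1 \in Good) && (p.2 \in Qset p.1)].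
Definition W := [set w : F * ('I_n * 'I_n * 'I_n) |
   (w.1 \in Ts) && (w.2 \in setX (setX (LR w.1) (LR w.1)) X)].

Lemma Bset_card : #|Bset| = beta.
Proof. by rewrite /Bset (card_pairs X (fun a => [set l in Y | (a, l) \in L])). Qed.

Lemma W_card : (#|W| <= #|Ts| * (9 * #|X|))%N.
Proof.
rewrite /W (card_pairs Ts (fun t => setX (setX (LR t) (LR t)) X)) -sum_nat_const.
apply: leq_sum => t; rewrite inE => /andP [_ /andP [_ h3]].
by rewrite !cardsX leq_mul2r; apply/orP; right; apply: (leq_mul h3 h3).
Qed.

Lemma LR_sub (f g : F) (S : {set 'I_n}) : f \in Good ->
  (forall x, x != u f -> x \notin S -> g x = f x) -> LR g \subset u f |: S.
Proof.
move=> fG H; apply/subsetP=> x; rewrite !inE => /andP [xX xL].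
case: (boolP (x \in S)) => xS; first by rewrite orbT.
case: (boolP (x == u f)) => // xu.
by move/negP: (xu) => xu0; case: xu0; apply/eqP; apply: (u_uniq fG xX); rewrite -(H x xu xS).
Qed.

Lemma card3 (a b c : 'I_n) : (#|a |: (b |: [set c])| <= 3)%N.
Proof.
rewrite !cardsU1 cards1.
by case: (a \notin _); case: (b \notin _).
Qed.

Lemma Ts_mem (g f : F) (a b c : 'I_n) : f \in Good -> is_bij X Y g ->
  (forall x, x != u f -> x \notin [set a; b] -> g x = f x) -> u f != c -> u f \in LR g -> c \in LR g ->
  g \in Ts.
Proof.
move=> fG gb H uc uL cL; rewrite !inE gb /=; apply/andP; split.
  have : [set u f; c] \subset LR g by apply/subsetP=> x; rewrite in_set2 => /orP [] /eqP ->.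
  by move/subset_leq_card; rewrite cards2 uc.
apply: leq_trans (subset_leq_card (LR_sub fG H)) _; exact: card3.
Qed.

Lemma injA : (#|SA| <= #|Zs| * #|Bset|)%N.
Proof.
pose phi (p : F * 'I_n) := (sw p.1 (u p.1) p.2, (u p.1, p.1 (u p.1))).
have sub : phi @: SA \subset setX Zs Bset.
  apply/subsetP=> y /imsetP [[f k] pS ->]; move: pS; rewrite inE /= => /andP [fG].
  rewrite /Zset inE => /andP [kX /andP [h1 h2]].
  have iX := u_in fG.
  have kX' : k \in X by move: kX; rewrite !inE => /andP [].
  rewrite inE /phi /=; apply/andP; split.
  - rewrite inE; apply/andP; split; first by rewrite inE (sw_bij (Good_bij fG) iX kX').
    apply/eqP/setP=> x.
    rewrite inE in_set0; apply/negbTE; rewrite negb_and.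
    case: (boolP (x \in X)) => //= xX.
    rewrite swE; case: tpermP => [->|->|xi xk] //.
    by apply/negP=> xL; apply: xi; apply: (u_uniq fG xX xL).
  - by rewrite inE /= iX /= inE (bij_in (Good_bij fG) iX) (u_L fG).
have inj : {in SA &, injective phi}.
  move=> [f k] [f' k'] pS pS'; move: pS pS'; rewrite !inE /= => /andP [fG kZ] /andP [fG' kZ'].
  have {}fG : f \in Good by rewrite /Good !inE.
  have {}fG' : f' \in Good by rewrite /Good !inE.
  rewrite /phi /= => [[E1 E2 E3]].
  have kX : k \in X by case/and3P: kZ => /andP [].
  have kX' : k' \in X by case/and3P: kZ' => /andP [].
  have bb := sw_bij (Good_bij fG') (u_in fG') kX'.
  have Ek : k = k'.
    apply: (bij_inj bb kX kX').
    have e1 : sw f' (u f') k' k = f (u f) by rewrite -E1 swE tpermR.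
    have e2 : sw f' (u f') k' k' = f' (u f') by rewrite swE tpermR.
    by rewrite e1 e2 E3.
  move: E1; rewrite -Ek -E2 => E1.
  by rewrite -(swK f (u f) k) E1 swK Ek.
rewrite -cardsX -(card_in_imset inj); exact: subset_leq_card sub.
Qed.

Lemma injB : (#|SB| <= #|W|)%N.
Proof.
pose phi (p : F * ('I_n * 'I_n)) := (sw p.1 p.2.1 p.2.2, (p.2.1, p.2.1, p.2.2)).
have sub : phi @: SB \subset W.
  apply/subsetP=> y /imsetP [[f [k k']] pS ->].
  have /andP [fG kP] : (f \in Good) && ((k, k') \in Pset f) by move: pS; rewrite inE.
  rewrite /Pset !inE /= in kP.
  case/and3P: kP => /andP [ki kX] /andP [k'i k'X] kL.
  have iX := u_in fG.
  have tb := sw_bij (Good_bij fG) kX k'X.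
  have uL : u f \in LR (sw f k k').
    by rewrite inE iX swE tpermD //; apply: u_L.
  have kL' : k \in LR (sw f k k') by rewrite inE kX swE tpermL.
  rewrite inE /phi /=; apply/andP; split.
    apply: (Ts_mem (a := k) (b := k') fG tb _ _ uL kL'); last by rewrite eq_sym.
    by move=> x _; rewrite !inE negb_or => /andP [xk xk']; rewrite swE tpermD // eq_sym.
  by rewrite !in_setX kL' k'X.
have inj : {in SB &, injective phi}.
  move=> [f [k k']] [f' [l l']] _ _; rewrite /phi /= => [[E1 E2 _ E3]].
  by rewrite -(swK f k k') E1 -E2 -E3 swK.
rewrite -(card_in_imset inj); exact: subset_leq_card sub.
Qed.

Lemma injQ : (#|SQ| <= #|W|)%N.
Proof.
pose phi (p : F * ('I_n * 'I_n)) :=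
  (sw (sw p.1 (u p.1) p.2.1) p.2.1 p.2.2, (u p.1, p.2.2, p.2.1)).
have sub : phi @: SQ \subset W.
  apply/subsetP=> y /imsetP [[f [k k']] pS ->].
  have /andP [fG kP] : (f \in Good) && ((k, k') \in Qset f) by move: pS; rewrite inE.
  rewrite /Qset in_setX /= !inE in kP.
  move: kP => /andP [/andP [/andP [ki kX] kL] /andP [/andP [k'i k'X] k'L]].
  have iX := u_in fG.
  have tb := sw_bij (sw_bij (Good_bij fG) iX kX) kX k'X.
  have uL : u f \in LR (sw (sw f (u f) k) k k').
    by rewrite inE iX !swE (tpermD ki k'i) tpermL.
  have k'L' : k' \in LR (sw (sw f (u f) k) k k').
    by rewrite inE k'X !swE tpermR tpermR.
  rewrite inE /phi /=; apply/andP; split.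
    apply: (Ts_mem (a := k) (b := k') fG tb _ _ uL k'L'); last by rewrite eq_sym.
    move=> x xu; rewrite !inE negb_or => /andP [xk xk'].
    rewrite eq_sym in xu; rewrite eq_sym in xk; rewrite eq_sym in xk'.
    by rewrite !swE (tpermD xk xk') (tpermD xu xk).
  by rewrite !in_setX uL k'L' kX.
have inj : {in SQ &, injective phi}.
  move=> [f [k k']] [f' [l l']] _ _; rewrite /phi /= => [[E1 E2 E3 E4]].
  by rewrite -(swK f (u f) k) -(swK (sw f (u f) k) k k') E1 -E2 -E3 -E4 !swK.
rewrite -(card_in_imset inj); exact: subset_leq_card sub.
Qed.


Lemma part : (#|Good| + #|Zs| + #|Ts| <= #|bijs X Y|)%N.
Proof.
rewrite /Good /Zs /Ts -!sum_bool_card -!big_split /= -sum1_card.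
apply: leq_sum => f _; rewrite /good_diag -/(LR f).
case: (boolP (LR f == set0)) => [/eqP ->|ne]; first by rewrite cards0.
have : (0 < #|LR f|)%N by rewrite card_gt0.
by case: #|LR f| => [|[|k]] //= _; rewrite add0n leq_b1.
Qed.

End Comb.

Local Open Scope ring_scope.

Theorem lemma2p16 (R : realFieldType) (n : nat) (L : {set 'I_n * 'I_n})
    (X Y : {set 'I_n}) (q : R) :
  #|X| = #|Y| -> (1 <= #|X|)%N -> q < 1 / 50 ->
  q_good L X Y q ->
  has_strong_line L X Y (13 * q).
Proof.
move=> XY X1 q50 qg.
have [d dX] : exists d, d \in X by apply/card_gt0P.
set m := #|X|.
set T := #|bijs X Y|.
set G := #|Good L X Y|.
set Z := #|Zs L X Y|.
set N := #|Ts L X Y|.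
set bt := beta L X Y.
have hpart : (G + Z + N <= T)%N := part L X Y.
have hT : (0 < T)%N.
  rewrite lt0n; apply/negP => /eqP T0; move: qg; rewrite /q_good -/T T0 invr0 mulr0.
  by move=> h; move: q50; lra.
have hTr : (0:R) < T%:R by rewrite ltr0n.
have hG : (1 - q) * T%:R <= G%:R.
  by rewrite -(ler_pdivlMr _ _ hTr).
set Gd := Good L X Y.
have hA : (\sum_(f in Gd) #|Zset L X d f| <= Z * bt)%N.
  by have := injA L X Y d; rewrite /SA (card_pairs Gd (Zset L X d)) Bset_card.
have hB : (\sum_(f in Gd) #|Pset L X d f| <= N * (9 * m))%N.
  have := leq_trans (injB L X Y d) (W_card L X Y).
  by rewrite /SB (card_pairs Gd (Pset L X d)).
have hQ : (\sum_(f in Gd) #|Qset L X d f| <= N * (9 * m))%N.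
  have := leq_trans (injQ L X Y d) (W_card L X Y).
  by rewrite /SQ (card_pairs Gd (Qset L X d)).
pose A f : R := (av L X Y d f)%:R.
pose B f : R := (bv L X d f)%:R.
pose D := \sum_(f in Gd) (m%:R - 1 - A f - B f).
pose S2 := \sum_(f in Gd) (A f * B f).
have e1 : D <= Z%:R * bt%:R.
  rewrite -natrM; apply: le_trans (_ : \sum_(f in Gd) (#|Zset L X d f|%:R : R) <= _).
    apply: ler_sum => f fG; have := Zset_card d fG; rewrite -(ler_nat R) !natrD.
    rewrite /A /B; lra.
  by rewrite -natr_sum ler_nat.
have e2 : G%:R * (bt%:R - m%:R) + D <= N%:R * (9 * m%:R).
  have -> : G%:R * (bt%:R - m%:R) + D = \sum_(f in Gd) (#|Pset L X d f|%:R : R).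
    rewrite /D /G -/Gd mulrC mulr_natr -sumr_const -big_split /=; apply: eq_bigr => f fG.
    have := Pset_card d fG; rewrite -/bt => <-; rewrite !natrD /A /B; lra.
  by rewrite -natr_sum -(natrM R 9 m) -natrM ler_nat.
have e3 : S2 <= N%:R * (9 * m%:R).
  have -> : S2 = \sum_(f in Gd) (#|Qset L X d f|%:R : R).
    by apply: eq_bigr => f fG; rewrite (Qset_card d fG) natrM.
  by rewrite -natr_sum -(natrM R 9 m) -natrM ler_nat.
have hp : G%:R + Z%:R + N%:R <= T%:R :> R by rewrite -!natrD ler_nat.
have z0 : 0 <= Z%:R :> R by [].
have n0 : 0 <= N%:R :> R by [].
have m1 : 1 <= m%:R :> R by rewrite ler1n.
have q0 : 0 <= q by nra.
have g0 : 0 < G%:R :> R by nra.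
have s1 : (1 - q) * (Z%:R + N%:R) <= q * G%:R by nra.
have s2 : 49 * (Z%:R + N%:R) <= 50 * q * G%:R by nra.
have s3 : D * (G%:R + Z%:R) <= Z%:R * m%:R * (9 * N%:R + G%:R).
  have h1 : G%:R * D <= Z%:R * (G%:R * bt%:R) by nra.
  have h2 : G%:R * bt%:R <= N%:R * (9 * m%:R) + G%:R * m%:R - D by nra.
  nra.
have s4 : 49 * N%:R <= G%:R :> R by nra.
have s5 : D * (G%:R + Z%:R) <= (58 / 49) * Z%:R * m%:R * (G%:R + Z%:R).
  have : Z%:R * m%:R * (9 * N%:R + G%:R) <= (58 / 49) * Z%:R * m%:R * (G%:R + Z%:R) :> R.
    have zm : 0 <= Z%:R * m%:R :> R by nra.
    nra.
  lra.
have s6 : D <= (58 / 49) * Z%:R * m%:R.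
  have gz : 0 < G%:R + Z%:R :> R by lra.
  by rewrite -(ler_pM2r gz).
have key : D + S2 <= 13 * q * m%:R * G%:R by nra.
have [f fG Hf] : exists2 f, f \in Gd & m%:R - 1 - A f - B f + A f * B f <= 13 * q * m%:R.
  case: (boolP [exists f in Gd, m%:R - 1 - A f - B f + A f * B f <= 13 * q * m%:R]).
    by move=> /exists_inP [f fG H]; exists f.
  move=> /exists_inPn H; exfalso.
  have : \sum_(f in Gd) (13 * q * m%:R) < \sum_(f in Gd) (m%:R - 1 - A f - B f + A f * B f).
    apply: ltr_sum.
      have : (0 < #|Gd|)%N by rewrite -(ltr0n R).
      by case/card_gt0P => f0 f0G; apply/hasP; exists f0; rewrite ?mem_index_enum.
    by move=> f fG; have := H f fG; rewrite -ltNge.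
  rewrite sumr_const big_split /= -/D -/S2 -mulr_natr; lra.
have iX := u_in d fG.
have Hrow : #|[set j in Y | (u L X d f, j) \in L]| = (1 + av L X Y d f)%N.
  by have := rr_split d (u L X d f) fG; rewrite (u_L d fG).
have Hcol : #|[set k in X | (k, f (u L X d f)) \in L]| = (1 + bv L X d f)%N.
  rewrite (cardsD1 (u L X d f)) inE iX (u_L d fG); congr (_ + _)%N.
  by apply: eq_card => k; rewrite !inE andbA.
have A0 : 0 <= A f by [].
have B0 : 0 <= B f by [].
case: (boolP (1 <= av L X Y d f)%N) => ha.
  left; exists (u L X d f); split => //.
  rewrite -XY -/m Hrow natrD.
  have A1 : 1 <= A f by rewrite /A ler1n.
  have : 0 <= B f * (A f - 1) by apply: mulr_ge0; lra.
  rewrite -/(A f); nra.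
right; exists (f (u L X d f)); split; first exact: bij_in (Good_bij fG) iX.
have Az : A f = 0 by rewrite /A; move: ha; rewrite lt0n negbK => /eqP ->.
rewrite -/m Hcol natrD -/(B f).
rewrite Az in Hf; lra.
Qed.
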